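(* Let $T$ be a rooted binary phylogenetic tree (root of out-degree 2) with leaf set $X$, $|X|\ge 3$, and edge substitution probabilities $p_e\in[0,\tfrac12]$, under the $N_2$ model. Let $y,z\in X$ be two leaves forming a cherry with common parent $w$, and let $p_y,p_z$ be the substitution probabilities of the edges $(w,y)$ and $(w,z)$. Put $$\theta=(1-p_y)(1-p_z)+p_yp_z \quad(\text{the probability that } f(y)=f(z)),\qquad \pi=\frac{p_yp_z}{\theta}.$$ Then $\pi\le\min\{p_y,p_z\}$ and $$RA_{\rm MP}(T)=\theta\cdot RA_{\rm MP}(T'_\pi)+(1-\theta)\cdot RA_{\rm MP}(T'').$$
   Context: A rooted binary phylogenetic tree is a finite tree with a distinguished root vertex $\rho$, all edges directed away from $\rho$, in which $\rho$ has out-degree 2 (such a tree is written $T$) or out-degree 1 (written $\dot T$; the edge at $\rho$ is then called the stem edge), and every other vertex has in-degree 1 and out-degree 0 or 2; vertices of out-degree 0 are leaves, forming the leaf set $X$. Under the Neyman $r$-state model $N_r$ ($r\ge2$) on a state set $\mathcal A$ with $|\mathcal A|=r$, each edge $e$ carries a substitution probability $p_e\in[0,\frac{r-1}{r}]$; given the root state $F(\rho)$, states propagate independently along edges: for an edge $(u,v)$, $F(v)=F(u)$ with probability $1-p_e$, and otherwise $F(v)$ is uniform among the $r-1$ states different from $F(u)$. The character is $f=F|_X$. For a vertex $v$, $p(v)$ is the probability that $F(v)\neq F(\rho)$. Fitch sets: each leaf $x$ gets $\mathrm{FS}(x)=\{f(x)\}$; a vertex $v$ with children $v_1,v_2$ gets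 $\mathrm{FS}(v_1)\cap\mathrm{FS}(v_2)$ if this is nonempty and $\mathrm{FS}(v_1)\cup\mathrm{FS}(v_2)$ otherwise; a vertex with a single child gets the Fitch set of its child. $\mathrm{FS}(f,T)=\mathrm{FS}(\rho)$, and $\mathrm{MP}(f,T)$ is a state chosen uniformly at random from $\mathrm{FS}(f,T)$. The reconstruction accuracy of maximum parsimony is $RA_{\rm MP}(T)=\mathbb P(\mathrm{MP}(f,T)=\alpha\mid F(\rho)=\alpha)$ (independent of $\alpha$ by symmetry). Vertices of in-degree 1 and out-degree 1 may be suppressed (merging two consecutive edges into one with the composed substitution probability, which leaves the distribution of leaf states unchanged). The tree $T'_\pi$ is obtained from $T$ by deleting the leaves $y,z$ and their incident edges, attaching a new leaf $w'$ to $w$ via an edge $(w,w')$ with substitution probability $\pi$, and suppressing $w$. The tree $T''$ is obtained from $T$ by deleting $y$, $z$, $w$, and all edges incident to them (including the edge into $w$), and suppressing the resulting vertex of in- and out-degree 1 (if the parent of $w$ was the root, the result is a tree whose root has out-degree 1). *)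

(* Defs.v *)
From Stdlib Require Import Reals List.
Import ListNotations.
Open Scope R_scope.

(* Leaves are identified
   positionally.  [Node p1 t1 p2 t2] is a vertex with two children; the edge
   to the root of [t1] has substitution probability [p1], the edge to the
   root of [t2] has substitution probability [p2]. *)
Inductive tree : Type :=
| Leaf : tree
| Node : R -> tree -> R -> tree -> tree.

(* A whole rooted tree: either the root has out-degree 2 ([Rooted t] with
   the root being the top vertex of [t], a [Node]), or the root has
   out-degree 1 ([Planted p t]: stem edge with probability [p] to the top
   vertex of [t]). *)
Inductive rtree : Type :=
| Rooted : tree -> rtree
| Planted : R -> tree -> rtree.

Fixpoint nleaves (t : tree) : nat :=
  match t with
  | Leaf => 1%nat
  | Node _ t1 _ t2 => (nleaves t1 + nleaves t2)%nat
  end.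

Fixpoint probs_ok (t : tree) : Prop :=
  match t with
  | Leaf => True
  | Node p1 t1 p2 t2 =>
      0 <= p1 <= 1/2 /\ 0 <= p2 <= 1/2 /\ probs_ok t1 /\ probs_ok t2
  end.

(* N_2 transition probability along an edge with substitution probability p
   (with r = 2 the "other" state is unique, so it gets probability p/(r-1) = p). *)
Definition trans (p : R) (a b : bool) : R :=
  if Bool.eqb a b then 1 - p else p.

(* Composed substitution probability of two consecutive edges (N_2). *)
Definition comp (p q : R) : R := p * (1 - q) + (1 - p) * q.

(* Characters on the leaves, arranged along the tree shape. *)
Inductive chr : Type :=
| CLeaf : bool -> chr
| CNode : chr -> chr -> chr.

(* The list of all state assignments to the vertices strictly below / at a
   vertex with state [a] (one entry per assignment of states to the
   non-root vertices of the subtree), each with its probability (product of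
   transition probabilities over the edges) and the induced leaf character. *)
Fixpoint dist (a : bool) (t : tree) : list (R * chr) :=
  match t with
  | Leaf => [(1, CLeaf a)]
  | Node p1 t1 p2 t2 =>
      flat_map (fun b1 =>
        flat_map (fun b2 =>
          flat_map (fun wc1 =>
            map (fun wc2 =>
              (trans p1 a b1 * fst wc1 * (trans p2 a b2 * fst wc2),
               CNode (snd wc1) (snd wc2)))
              (dist b2 t2))
            (dist b1 t1))
          [true; false])
        [true; false]
  end.

Definition rdist (a : bool) (T : rtree) : list (R * chr) :=
  match T with
  | Rooted t => dist a t
  | Planted p t =>
      flat_map (fun b =>
        map (fun wc => (trans p a b * fst wc, snd wc)) (dist b t))
        [true; false]
  end.

Definition fset := bool -> bool.
Definition fs_nonempty (S : fset) : bool := orb (S true) (S false).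
Definition fs_card (S : fset) : nat :=
  ((if S true then 1 else 0) + (if S false then 1 else 0))%nat.

Fixpoint fitch (c : chr) : fset :=
  match c with
  | CLeaf b => fun x => Bool.eqb x b
  | CNode c1 c2 =>
      let S1 := fitch c1 in
      let S2 := fitch c2 in
      let I := fun x => andb (S1 x) (S2 x) in
      if fs_nonempty I then I else (fun x => orb (S1 x) (S2 x))
  end.
(* A vertex with a single child (stem root) gets its child's Fitch set, so
   the Fitch set of a character is [fitch c] for both kinds of rtree. *)

(* Probability that MP (uniform choice in the Fitch set) returns [a]. *)
Definition mp_prob (S : fset) (a : bool) : R :=
  if S a then / INR (fs_card S) else 0.

(* Reconstruction accuracy of maximum parsimony:
   P(MP(f,T) = a | F(rho) = a). *)
Definition RA_MP (a : bool) (T : rtree) : R :=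
  fold_right Rplus 0
    (map (fun wc => fst wc * mp_prob (fitch (snd wc)) a) (rdist a T)).

(* One-hole contexts: a tree with a distinguished vertex w (the hole);
   the innermost constructor records the parent u of w, the probability of
   the edge (u,w) and the sibling subtree of w. *)
Inductive ctx : Type :=
| HoleL : R -> R -> tree -> ctx     (* HoleL p q s : u = Node p [w] q s *)
| HoleR : R -> tree -> R -> ctx     (* HoleR q s p : u = Node q s p [w] *)
| InL : R -> ctx -> R -> tree -> ctx
| InR : R -> tree -> R -> ctx -> ctx.

Fixpoint plug (c : ctx) (w : tree) : tree :=
  match c with
  | HoleL p q s => Node p w q s
  | HoleR q s p => Node q s p w
  | InL p1 c' p2 t => Node p1 (plug c' w) p2 t
  | InR p1 t p2 c' => Node p1 t p2 (plug c' w)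
  end.

Fixpoint ctx_ok (c : ctx) : Prop :=
  match c with
  | HoleL p q s => 0 <= p <= 1/2 /\ 0 <= q <= 1/2 /\ probs_ok s
  | HoleR q s p => 0 <= p <= 1/2 /\ 0 <= q <= 1/2 /\ probs_ok s
  | InL p1 c' p2 t => 0 <= p1 <= 1/2 /\ 0 <= p2 <= 1/2 /\ ctx_ok c' /\ probs_ok t
  | InR p1 t p2 c' => 0 <= p1 <= 1/2 /\ 0 <= p2 <= 1/2 /\ probs_ok t /\ ctx_ok c'
  end.

(* T'_pi: replace the subtree at w by a single new leaf w' hanging from w via
   an edge with probability pi, then suppress w: the edge (u,w) with
   probability p and the edge (w,w') merge into one edge (u,w') with
   probability comp p pi. *)
Fixpoint plug_leaf_suppress (c : ctx) (pi : R) : tree :=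
  match c with
  | HoleL p q s => Node (comp p pi) Leaf q s
  | HoleR q s p => Node q s (comp p pi) Leaf
  | InL p1 c' p2 t => Node p1 (plug_leaf_suppress c' pi) p2 t
  | InR p1 t p2 c' => Node p1 t p2 (plug_leaf_suppress c' pi)
  end.

Definition T_prime (c : ctx) (pi : R) : rtree := Rooted (plug_leaf_suppress c pi).

(* T'': delete the subtree at w together with the edge (u,w); the parent u
   then has in- and out-degree 1 (if u is not the root) and is suppressed:
   the edge into u (probability r) and the edge from u to the sibling s
   (probability q) merge into an edge with probability comp r q.
   [delete_in r c] returns the new edge probability and subtree replacing
   (edge of probability r into the top of plug c _). *)
Fixpoint delete_in (r : R) (c : ctx) : R * tree :=
  match c with
  | HoleL p q s => (comp r q, s)
  | HoleR q s p => (comp r q, s)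
  | InL p1 c' p2 t =>
      let (a, s) := delete_in p1 c' in (r, Node a s p2 t)
  | InR p1 t p2 c' =>
      let (a, s) := delete_in p2 c' in (r, Node p1 t a s)
  end.

(* If u is the root, the result has a root of out-degree 1 (stem edge). *)
Definition T_dprime (c : ctx) : rtree :=
  match c with
  | HoleL p q s => Planted q s
  | HoleR q s p => Planted q s
  | InL p1 c' p2 t => let (a, s) := delete_in p1 c' in Rooted (Node a s p2 t)
  | InR p1 t p2 c' => let (a, s) := delete_in p2 c' in Rooted (Node p1 t a s)
  end.

(* Main.v *)
Require Import Defs.
From Stdlib Require Import Reals Lra Psatz List FunctionalExtensionality.
Import ListNotations.
Open Scope R_scope.

Definition lsum {A : Type} (l : list A) (f : A -> R) : R :=
  fold_right Rplus 0 (map f l).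

Lemma lsum_nil {A} (f : A -> R) : lsum [] f = 0.
Proof. reflexivity. Qed.
Lemma lsum_cons {A} (x : A) l f : lsum (x :: l) f = f x + lsum l f.
Proof. reflexivity. Qed.
Lemma lsum_app {A} (l1 l2 : list A) f : lsum (l1 ++ l2) f = lsum l1 f + lsum l2 f.
Proof. induction l1; simpl; unfold lsum in *; simpl; [ring|]. rewrite IHl1; ring. Qed.
Lemma lsum_flat_map {A B} (F : A -> list B) l f :
  lsum (flat_map F l) f = lsum l (fun x => lsum (F x) f).
Proof. induction l; [reflexivity|]. simpl. rewrite lsum_app, lsum_cons, IHl. reflexivity. Qed.
Lemma lsum_map {A B} (G : A -> B) l f : lsum (map G l) f = lsum l (fun x => f (G x)).
Proof. unfold lsum. rewrite map_map. reflexivity. Qed.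
Lemma lsum_ext {A} (l : list A) f g : (forall x, f x = g x) -> lsum l f = lsum l g.
Proof. intros H. induction l; [reflexivity|]. rewrite !lsum_cons, IHl, H. reflexivity. Qed.
Lemma lsum_scal {A} (l : list A) c f : lsum l (fun x => c * f x) = c * lsum l f.
Proof. induction l; [unfold lsum; simpl; ring|]. rewrite !lsum_cons, IHl. ring. Qed.
Lemma lsum_plus {A} (l : list A) f g : lsum l (fun x => f x + g x) = lsum l f + lsum l g.
Proof. induction l; [unfold lsum; simpl; ring|]. rewrite !lsum_cons, IHl. ring. Qed.

Definition SS (a : bool) (t : tree) (g : chr -> R) : R :=
  lsum (Defs.dist a t) (fun wc => fst wc * g (snd wc)).

Lemma S_ext a t f g : (forall c, f c = g c) -> SS a t f = SS a t g.
Proof. intros H. unfold SS. apply lsum_ext. intros; rewrite H; reflexivity. Qed.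

Lemma S_lin a t x y f g : SS a t (fun c => x * f c + y * g c) = x * SS a t f + y * SS a t g.
Proof.
  unfold SS. rewrite <- !lsum_scal, <- lsum_plus. apply lsum_ext. intros; ring.
Qed.

Lemma S_leaf a g : SS a Leaf g = g (CLeaf a).
Proof. unfold SS, lsum; simpl; ring. Qed.

Lemma S_inner p1 p2 a b1 b2 t1 t2 g :
  lsum (flat_map (fun wc1 => map (fun wc2 =>
     (trans p1 a b1 * fst wc1 * (trans p2 a b2 * fst wc2), CNode (snd wc1) (snd wc2)))
     (Defs.dist b2 t2)) (Defs.dist b1 t1)) (fun wc => fst wc * g (snd wc))
  = trans p1 a b1 * trans p2 a b2 * SS b1 t1 (fun c1 => SS b2 t2 (fun c2 => g (CNode c1 c2))).
Proof.
  rewrite lsum_flat_map. unfold SS. rewrite <- lsum_scal. apply lsum_ext; intro wc1.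
  rewrite lsum_map. rewrite <- lsum_scal. rewrite <- lsum_scal. apply lsum_ext; intro wc2.
  simpl. ring.
Qed.

Lemma S_node a p1 t1 p2 t2 g :
  SS a (Node p1 t1 p2 t2) g =
  trans p1 a true * trans p2 a true * SS true t1 (fun c1 => SS true t2 (fun c2 => g (CNode c1 c2)))
+ trans p1 a true * trans p2 a false * SS true t1 (fun c1 => SS false t2 (fun c2 => g (CNode c1 c2)))
+ trans p1 a false * trans p2 a true * SS false t1 (fun c1 => SS true t2 (fun c2 => g (CNode c1 c2)))
+ trans p1 a false * trans p2 a false * SS false t1 (fun c1 => SS false t2 (fun c2 => g (CNode c1 c2))).
Proof.
  unfold SS at 1. cbn [Defs.dist]. rewrite lsum_flat_map, !lsum_cons, lsum_nil. cbv beta.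
  rewrite !(lsum_flat_map _ [true; false]), !lsum_cons, !lsum_nil. cbv beta.
  rewrite !S_inner. ring.
Qed.

Definition fcomb (S1 S2 : fset) : fset :=
  let I := fun x => andb (S1 x) (S2 x) in
  if fs_nonempty I then I else (fun x => orb (S1 x) (S2 x)).

Lemma fitch_node c1 c2 : fitch (CNode c1 c2) = fcomb (fitch c1) (fitch c2).
Proof. reflexivity. Qed.

Definition E (a : bool) (r : R) (t : tree) (h : fset -> R) : R :=
  trans r a true * SS true t (fun ch => h (fitch ch)) +
  trans r a false * SS false t (fun ch => h (fitch ch)).

Lemma E_ext a r t h1 h2 : (forall c, h1 (fitch c) = h2 (fitch c)) -> E a r t h1 = E a r t h2.
Proof. intros H. unfold E. rewrite (S_ext true t _ (fun ch => h2 (fitch ch))),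
  (S_ext false t _ (fun ch => h2 (fitch ch))); auto. Qed.

Lemma E_lin a r t x y f g : E a r t (fun F => x * f F + y * g F) = x * E a r t f + y * E a r t g.
Proof. unfold E. rewrite !S_lin. ring. Qed.

Lemma S_nodeE b p1 t1 p2 t2 h :
  SS b (Node p1 t1 p2 t2) (fun ch => h (fitch ch)) =
  E b p1 t1 (fun F1 => E b p2 t2 (fun F2 => h (fcomb F1 F2))).
Proof.
  assert (Hn : forall b1 b2, SS b1 t1 (fun c1 => SS b2 t2 (fun c2 => h (fitch (CNode c1 c2))))
     = SS b1 t1 (fun c1 => SS b2 t2 (fun c2 => h (fcomb (fitch c1) (fitch c2))))) by reflexivity.
  rewrite S_node, (Hn true true), (Hn true false), (Hn false true), (Hn false false). unfold E.
  rewrite (S_lin true t1 (trans p2 b true) (trans p2 b false)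
     (fun c1 => SS true t2 (fun c2 => h (fcomb (fitch c1) (fitch c2))))
     (fun c1 => SS false t2 (fun c2 => h (fcomb (fitch c1) (fitch c2))))).
  rewrite (S_lin false t1 (trans p2 b true) (trans p2 b false)
     (fun c1 => SS true t2 (fun c2 => h (fcomb (fitch c1) (fitch c2))))
     (fun c1 => SS false t2 (fun c2 => h (fcomb (fitch c1) (fitch c2))))).
  ring.
Qed.

Lemma E_comp a r q t h :
  trans r a true * E true q t h + trans r a false * E false q t h = E a (Defs.comp r q) t h.
Proof. unfold E, trans, Defs.comp. destruct a; simpl; ring. Qed.

Lemma fitch_ne c : fs_nonempty (fitch c) = true.
Proof.
  induction c as [b|c1 IH1 c2 IH2].
  - destruct b; reflexivity.
  - simpl. revert IH1 IH2. generalize (fitch c1) (fitch c2). intros f g.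
    unfold fs_nonempty. cbv beta zeta. intros H1 H2.
    destruct (f true && g true || f false && g false)%bool eqn:E; simpl;
    destruct (f true), (f false), (g true), (g false); simpl in *; auto; discriminate.
Qed.

Definition full : fset := fun _ => true.

Lemma fcomb_full_l F : fs_nonempty F = true -> fcomb full F = F.
Proof.
  intros H. unfold fcomb, full, fs_nonempty in *. simpl. rewrite H. reflexivity.
Qed.

Lemma fcomb_full_r F : fs_nonempty F = true -> fcomb F full = F.
Proof.
  intros H. unfold fcomb, full. unfold fs_nonempty in *.
  rewrite !Bool.andb_true_r. rewrite H.
  apply functional_extensionality; intros x; apply Bool.andb_true_r.
Qed.

Lemma E_full_l a q s h : E a q s (fun F2 => h (fcomb full F2)) = E a q s h.
Proof. apply E_ext. intros c. rewrite fcomb_full_l; auto using fitch_ne. Qed.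
Lemma E_full_r a q s h : E a q s (fun F1 => h (fcomb F1 full)) = E a q s h.
Proof. apply E_ext. intros c. rewrite fcomb_full_r; auto using fitch_ne. Qed.

Section Main.
Variables py pz theta pi : R.
Hypothesis Hth : theta = (1 - py) * (1 - pz) + py * pz.
Hypothesis Hne : theta <> 0.
Hypothesis Hpi : pi = py * pz / theta.

Let W := Node py Leaf pz Leaf.

Lemma cherry b p k :
  E b p W k = theta * E b (Defs.comp p pi) Leaf k + (1 - theta) * k full.
Proof.
  unfold E, W. rewrite !S_node. repeat (rewrite S_leaf; cbv beta).
  assert (E1 : fitch (CNode (CLeaf true) (CLeaf true)) = fitch (CLeaf true))
    by (apply functional_extensionality; intros []; reflexivity).
  assert (E2 : fitch (CNode (CLeaf false) (CLeaf false)) = fitch (CLeaf false))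
    by (apply functional_extensionality; intros []; reflexivity).
  assert (E3 : fitch (CNode (CLeaf true) (CLeaf false)) = full)
    by (apply functional_extensionality; intros []; reflexivity).
  assert (E4 : fitch (CNode (CLeaf false) (CLeaf true)) = full)
    by (apply functional_extensionality; intros []; reflexivity).
  rewrite ?S_leaf, E1, E2, E3, E4.
  subst pi. unfold trans, Defs.comp. destruct b; simpl; rewrite Hth in *; field; auto.
Qed.

Lemma mainL c : forall a r h,
  E a r (plug c W) h = theta * E a r (plug_leaf_suppress c pi) h
    + (1 - theta) * E a (fst (delete_in r c)) (snd (delete_in r c)) h.
Proof.
  induction c as [p q s|q s p|p1 c' IH p2 t|p1 t p2 c' IH]; intros a r h; simpl.
  - unfold E at 1 2. rewrite !S_nodeE, !cherry. cbv beta.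
    rewrite !E_full_l, <- (E_comp a r q s h). ring.
  - unfold E at 1 2. rewrite !S_nodeE.
    rewrite (E_ext true q s _ (fun F1 => theta * E true (Defs.comp p pi) Leaf (fun F2 => h (fcomb F1 F2))
       + (1 - theta) * h (fcomb F1 full))) by (intros; apply cherry).
    rewrite (E_ext false q s _ (fun F1 => theta * E false (Defs.comp p pi) Leaf (fun F2 => h (fcomb F1 F2))
       + (1 - theta) * h (fcomb F1 full))) by (intros; apply cherry).
    rewrite !E_lin, !E_full_r, <- (E_comp a r q s h). ring.
  - destruct (delete_in p1 c') as [a' s] eqn:Hd. simpl.
    unfold E at 1 2 3. rewrite !S_nodeE, !IH, Hd. simpl. ring.
  - destruct (delete_in p2 c') as [a' s] eqn:Hd. simpl.
    unfold E at 1 2 3. rewrite !S_nodeE.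
    rewrite (E_ext true p1 t _ (fun F1 => theta * E true p2 (plug_leaf_suppress c' pi) (fun F2 => h (fcomb F1 F2))
       + (1 - theta) * E true a' s (fun F2 => h (fcomb F1 F2))))
      by (intros; rewrite IH, Hd; reflexivity).
    rewrite (E_ext false p1 t _ (fun F1 => theta * E false p2 (plug_leaf_suppress c' pi) (fun F2 => h (fcomb F1 F2))
       + (1 - theta) * E false a' s (fun F2 => h (fcomb F1 F2))))
      by (intros; rewrite IH, Hd; reflexivity).
    rewrite !E_lin. ring.
Qed.
End Main.

Lemma RA_rooted a t : RA_MP a (Rooted t) = SS a t (fun ch => mp_prob (fitch ch) a).
Proof. reflexivity. Qed.

Lemma E0 a t h : E a 0 t h = SS a t (fun ch => h (fitch ch)).
Proof. unfold E, trans. destruct a; simpl; ring. Qed.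

Lemma RA_planted a q s : RA_MP a (Planted q s) = E a q s (fun F => mp_prob F a).
Proof.
  unfold RA_MP, rdist. fold (lsum (flat_map (fun b => map (fun wc => (trans q a b * fst wc, snd wc)) (Defs.dist b s)) [true; false])
     (fun wc => fst wc * mp_prob (fitch (snd wc)) a)).
  rewrite lsum_flat_map, !lsum_cons, lsum_nil. cbv beta. rewrite !lsum_map.
  unfold E, SS. rewrite <- !lsum_scal. simpl.
  rewrite (lsum_ext (Defs.dist true s) _ (fun x => trans q a true * (fst x * mp_prob (fitch (snd x)) a)))
    by (intros; ring).
  rewrite (lsum_ext (Defs.dist false s) _ (fun x => trans q a false * (fst x * mp_prob (fitch (snd x)) a)))
    by (intros; ring).
  ring.
Qed.

Lemma RA_dprime a c :
  RA_MP a (T_dprime c) = E a (fst (delete_in 0 c)) (snd (delete_in 0 c)) (fun F => mp_prob F a).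
Proof.
  destruct c as [p q s|q s p|p1 c' p2 t|p1 t p2 c']; simpl.
  - rewrite RA_planted. replace (Defs.comp 0 q) with q by (unfold Defs.comp; ring). reflexivity.
  - rewrite RA_planted. replace (Defs.comp 0 q) with q by (unfold Defs.comp; ring). reflexivity.
  - destruct (delete_in p1 c'). simpl. rewrite E0. reflexivity.
  - destruct (delete_in p2 c'). simpl. rewrite E0. reflexivity.
Qed.

Theorem theorem1 (c : ctx) (py pz : R) (alpha : bool) :
  ctx_ok c ->
  0 <= py <= 1/2 -> 0 <= pz <= 1/2 ->
  (3 <= nleaves (plug c (Node py Leaf pz Leaf)))%nat ->
  let theta := (1 - py) * (1 - pz) + py * pz in
  let pi := py * pz / theta in
  pi <= Rmin py pz /\
  RA_MP alpha (Rooted (plug c (Node py Leaf pz Leaf))) =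
    theta * RA_MP alpha (T_prime c pi) + (1 - theta) * RA_MP alpha (T_dprime c).
Proof.
  intros _ Hy Hz _ theta pi.
  assert (Hpos : 0 < theta) by (unfold theta; nra).
  split.
  - assert (Hk : pi * theta = py * pz) by (unfold pi; field; apply Rgt_not_eq; exact Hpos).
    assert (B1 : pz <= theta) by (unfold theta; nra).
    assert (B2 : py <= theta) by (unfold theta; nra).
    assert (A1 : pi <= py).
    { apply Rmult_le_reg_r with theta; auto. rewrite Hk.
      apply Rmult_le_compat_l; lra. }
    assert (A2 : pi <= pz).
    { apply Rmult_le_reg_r with theta; auto. rewrite Hk. rewrite (Rmult_comm py).
      apply Rmult_le_compat_l; lra. }
    unfold Rmin. destruct (Rle_dec py pz); auto.
  - rewrite RA_dprime. unfold T_prime. rewrite !RA_rooted, <- !(E0 alpha _ (fun F => mp_prob F alpha)).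
    apply (mainL py pz theta pi); auto; apply Rgt_not_eq; exact Hpos.
Qed.
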